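(* Consider the discrete setting described in the context and let $(F^n)_{n\ge0}=(f^n_{ij},g^n_{ij})$ solve the linearized scheme given there. Let $h^n_{ij}=f^n_{ij}-g^n_{ij}$ and define the discrete moments $u^n_{h,i}=\sum_j\Delta v\,h^n_{ij}$, $J^n_{h,i}=\sum_j\Delta v\,v_j h^n_{ij}$, $S^n_{h,i}=\sum_j\Delta v\,(v_j^2-D_0^\Delta)h^n_{ij}$, and $J^n_{f,i}=\sum_j\Delta v\,v_jf^n_{ij}$, $J^n_{g,i}=\sum_j\Delta v\,v_jg^n_{ij}$. Then for all $n\ge0$: $$\|u^n_h\|_2=C_u^*\|\Pi^\Delta F^n\|_\Delta,\quad \|J^n_h\|_2\le C^*_{J1}\|F^n\|_\Delta,\quad \|J^n_h\|_2\le C^*_{J1}\|(I-\Pi^\Delta)F^n\|_\Delta,$$ $$\|S^n_h\|_2\le C^*_S\|(I-\Pi^\Delta)F^n\|_\Delta,\quad \|(\rho_\infty^* )^{-1}J^n_f-\rho_\infty^*J^n_g\|_2\le C^*_{J2}\|(I-\Pi^\Delta)F^n\|_\Delta,$$ where $C_u^*=\sqrt{((\rho_\infty^* )^2+1)/\rho_\infty^*}$, $C^*_{J1}=\sqrt{2\max(\rho_\infty^*\overline D_1,(\rho_\infty^* )^{-1}\overline D_2)}$, $C_S^*=\sqrt{2\max\big(\rho_\infty^*(\overline Q_1-2\underline D_0\underline D_1+\overline D_0^2),(\rho_\infty^* )^{-1}(\overline Q_2-2\underline D_0\underline D_2+\overline D_0^2)\big)}$, $C^*_{J2}=\max((\rho_\infty^*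 )^{-1},\rho_\infty^* )C^*_{J1}$.
   Context: Space mesh: $N$ uniform cells of length $\Delta x$ of the torus, indexed by $i\in\mathcal I=\mathbb Z/N\mathbb Z$ (periodic). Velocity mesh: $\Delta v=v^*/L$, cells indexed by $j\in\mathcal J=\{-L+1,\dots,L\}$ with midpoints $v_j=(j-\tfrac12)\Delta v$. Time step $\Delta t>0$; $\lambda=\Delta x/(2\Delta t)$ a fixed positive constant. Fixed $\rho_\infty^*>0$. For $k=1,2$: $\chi_{k,j}>0$, $\chi_{k,j}=\chi_{k,1-j}$, $\sum_j\Delta v\,\chi_{k,j}=1$, $0<\underline D_k\le D_k^\Delta:=\sum_j\Delta v\,v_j^2\chi_{k,j}\le\overline D_k$, $Q_k^\Delta:=\sum_j\Delta v\,v_j^4\chi_{k,j}\le\overline Q_k$. $D_0^\Delta=\frac{(\rho_\infty^* )^2D_1^\Delta+D_2^\Delta}{(\rho_\infty^* )^2+1}$, and $\underline D_0,\overline D_0$ are constants with $\underline D_0\le D_0^\Delta\le\overline D_0$. Densities $\rho_{f,i}=\sum_j\Delta v f_{ij}$, $\rho_{g,i}=\sum_j\Delta v g_{ij}$. Linearized scheme ($n\ge0$): $\frac{f^{n+1}_{ij}-f^n_{ij}}{\Delta t}+\frac{1}{\Delta x\Delta v}(\mathcal F^{n+1}_{i+\frac12,j}-\mathcal F^{n+1}_{i-\frac12,j})=-\rho_\infty^*\chi_{1,j}\rho^{n+1}_{g,i}-(\rho_\infty^* )^{-1}f^{n+1}_{ij}$ and $\frac{g^{n+1}_{ij}-g^n_{ij}}{\Delta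 t}+\frac{1}{\Delta x\Delta v}(\mathcal G^{n+1}_{i+\frac12,j}-\mathcal G^{n+1}_{i-\frac12,j})=-(\rho_\infty^* )^{-1}\chi_{2,j}\rho^{n+1}_{f,i}-\rho_\infty^*g^{n+1}_{ij}$, with $\mathcal F^{n+1}_{i+\frac12,j}=\Delta v\frac{v_j}{2}(f^{n+1}_{i+1,j}+f^{n+1}_{ij})-\Delta v\lambda(f^{n+1}_{i+1,j}-f^{n+1}_{ij})$ and $\mathcal G$ likewise with $g$. Norms: $\|u\|_2^2=\sum_i\Delta x\,u_i^2$; $\|F\|_\Delta^2=\sum_{i,j}\Delta x\Delta v\big(\frac{f_{ij}^2}{\chi_{1,j}\rho_\infty^*}+\frac{g_{ij}^2\rho_\infty^*}{\chi_{2,j}}\big)$. Projection: $(\Pi^\Delta F)_{ij}=\frac{\rho_{f,i}-\rho_{g,i}}{(\rho_\infty^* )^2+1}((\rho_\infty^* )^2\chi_{1,j},-\chi_{2,j})$. *)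

(* Defs.v *)
From mathcomp Require Import all_boot all_order all_algebra reals.
Set Implicit Arguments. Unset Strict Implicit. Unset Printing Implicit Defensive.
Import Order.TTheory GRing.Theory Num.Theory.
Local Open Scope ring_scope.

Section Defs.
Variable R : realType.
Variables N L : nat.

(* space index i : 'I_N (periodic, via ordS / ord_pred);
   velocity index k : 'I_(2*L) encodes j = k - L + 1 in {-L+1,...,L} *)
Definition velidx (k : 'I_(2 * L)) : int := (nat_of_ord k)%:Z - L%:Z + 1.

Definition dvel (vstar : R) : R := vstar / L%:R.

Definition vel (dv : R) (k : 'I_(2 * L)) : R := ((velidx k)%:~R - 2^-1) * dv.

Definition grid := 'I_N -> 'I_(2 * L) -> R.

Definition dens (dv : R) (h : grid) (i : 'I_N) : R := \sum_k dv * h i k.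
Definition flux_mom (dv : R) (h : grid) (i : 'I_N) : R := \sum_k dv * vel dv k * h i k.
Definition S_mom (dv D0 : R) (h : grid) (i : 'I_N) : R :=
  \sum_k dv * (vel dv k ^+ 2 - D0) * h i k.

Definition numflux (dv lam : R) (h : grid) (i : 'I_N) (k : 'I_(2 * L)) : R :=
  dv * (vel dv k / 2) * (h (ordS i) k + h i k) - dv * lam * (h (ordS i) k - h i k).

Definition Dmom (dv : R) (chi : 'I_(2 * L) -> R) : R := \sum_k dv * vel dv k ^+ 2 * chi k.
Definition Qmom (dv : R) (chi : 'I_(2 * L) -> R) : R := \sum_k dv * vel dv k ^+ 4 * chi k.
Definition D0mom (dv rho : R) (chi1 chi2 : 'I_(2 * L) -> R) : R :=
  (rho ^+ 2 * Dmom dv chi1 + Dmom dv chi2) / (rho ^+ 2 + 1).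

Definition scheme_step (dx dt dv lam rho : R) (chi1 chi2 : 'I_(2 * L) -> R)
    (f0 g0 f1 g1 : grid) : Prop :=
  forall i k,
    (f1 i k - f0 i k) / dt
      + (numflux dv lam f1 i k - numflux dv lam f1 (ord_pred i) k) / (dx * dv)
      = - rho * chi1 k * dens dv g1 i - rho^-1 * f1 i k
  /\ (g1 i k - g0 i k) / dt
      + (numflux dv lam g1 i k - numflux dv lam g1 (ord_pred i) k) / (dx * dv)
      = - rho^-1 * chi2 k * dens dv f1 i - rho * g1 i k.

Definition norm2 (dx : R) (u : 'I_N -> R) : R := Num.sqrt (\sum_i dx * u i ^+ 2).

Definition normD (dx dv rho : R) (chi1 chi2 : 'I_(2 * L) -> R) (f g : grid) : R :=
  Num.sqrt (\sum_i \sum_k dx * dv *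
              (f i k ^+ 2 / (chi1 k * rho) + g i k ^+ 2 * rho / chi2 k)).

Definition projf (dv rho : R) (chi1 : 'I_(2 * L) -> R) (f g : grid) : grid :=
  fun i k => (dens dv f i - dens dv g i) / (rho ^+ 2 + 1) * (rho ^+ 2 * chi1 k).
Definition projg (dv rho : R) (chi2 : 'I_(2 * L) -> R) (f g : grid) : grid :=
  fun i k => (dens dv f i - dens dv g i) / (rho ^+ 2 + 1) * (- chi2 k).

Definition perpf (dv rho : R) (chi1 : 'I_(2 * L) -> R) (f g : grid) : grid :=
  fun i k => f i k - projf dv rho chi1 f g i k.
Definition perpg (dv rho : R) (chi2 : 'I_(2 * L) -> R) (f g : grid) : grid :=
  fun i k => g i k - projg dv rho chi2 f g i k.

Definition hdiff (f g : grid) : grid := fun i k => f i k - g i k.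

End Defs.

Section Consts.
Variable R : realType.
Definition C_u (rho : R) : R := Num.sqrt ((rho ^+ 2 + 1) / rho).
Definition C_J1 (rho Dhi1 Dhi2 : R) : R :=
  Num.sqrt (2 * Num.max (rho * Dhi1) (rho^-1 * Dhi2)).
Definition C_S (rho Dlo0 Dhi0 Dlo1 Dlo2 Qhi1 Qhi2 : R) : R :=
  Num.sqrt (2 * Num.max (rho * (Qhi1 - 2 * Dlo0 * Dlo1 + Dhi0 ^+ 2))
                         (rho^-1 * (Qhi2 - 2 * Dlo0 * Dlo2 + Dhi0 ^+ 2))).
Definition C_J2 (rho Dhi1 Dhi2 : R) : R := Num.max rho^-1 rho * C_J1 rho Dhi1 Dhi2.
End Consts.

(* Main.v *)
Require Import Defs.
From mathcomp Require Import all_boot all_order all_algebra reals.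
From mathcomp Require Import ring lra zify.
Import Order.TTheory GRing.Theory Num.Theory.
Local Open Scope ring_scope.

Lemma cs (R : realType) (n : nat) (dv : R) (a c p : 'I_n -> R) : 0 < dv -> (forall k, 0 < c k) ->
 (\sum_k dv * a k * p k)^+2 <= (\sum_k dv * a k ^+2 * c k) * (\sum_k dv * (p k ^+2 / c k)).
Proof.
move=> hdv hc.
have hc0 k : c k != 0 by rewrite gt_eqF.
set X := \sum_k _ * _ * c k.
set Y := \sum_k _ * (_ / c k).
set Z := \sum_k _ * _ * p k.
pose U k l := (dv * a k ^+ 2 * c k) * (dv * (p l ^+ 2 / c l)).
pose V k l := (dv * a k * p k) * (dv * a l * p l).
have hXY : X * Y = \sum_k \sum_l U k l.
  rewrite /X mulr_suml; apply: eq_bigr => k _; rewrite mulr_sumr //.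
have hYX : X * Y = \sum_k \sum_l U l k.
  rewrite hXY exchange_big //.
have hZ : Z ^+ 2 = \sum_k \sum_l V k l.
  rewrite expr2 /Z mulr_suml; apply: eq_bigr => k _; rewrite mulr_sumr //.
have E : \sum_k \sum_l (dv ^+ 2 * ((a k * c k * p l - a l * c l * p k) ^+ 2 / (c k * c l)))
   = X * Y + X * Y - 2 * Z ^+ 2.
  rewrite {1}hXY {1}hYX hZ mulr_sumr -big_split -sumrB /=.
  apply: eq_bigr => k _; rewrite mulr_sumr -big_split -sumrB /=.
  apply: eq_bigr => l _; rewrite /U /V; field.
  by rewrite !hc0.
have : 0 <= X * Y + X * Y - 2 * Z ^+ 2.
  rewrite -E; apply: sumr_ge0 => k _; apply: sumr_ge0 => l _.
  apply: mulr_ge0; first exact: sqr_ge0.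
  apply: divr_ge0; first exact: sqr_ge0.
  by apply: mulr_ge0; apply: ltW.
lra.
Qed.

Lemma velidx_rev (L : nat) (k : 'I_(2 * L)) : velidx (rev_ord k) = 1 - velidx k.
Proof.
rewrite /velidx /=; have := ltn_ord k; lia.
Qed.

Lemma vel_rev (R : realType) (L : nat) (dv : R) (k : 'I_(2 * L)) :
  vel dv (rev_ord k) = - vel dv k.
Proof.
rewrite /vel velidx_rev intrB /=. have -> : (1%:~R : R) = 1 by []. by field.
Qed.

Lemma sym_sum (R : realType) (L : nat) (dv : R) (chi : 'I_(2 * L) -> R) :
  (forall k k', velidx k' = 1 - velidx k -> chi k = chi k') ->
  \sum_k dv * vel dv k * chi k = 0.
Proof.
move=> hs.
have E : \sum_k dv * vel dv k * chi k = - \sum_k dv * vel dv k * chi k.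
  rewrite {1}(reindex_inj rev_ord_inj) /= -sumrN.
  apply: eq_bigr => k _; rewrite vel_rev -(hs k (rev_ord k)) ?velidx_rev //; ring.
lra.
Qed.

Section Core.
Variable R : realType.
Variables N L : nat.
Variables (dx dv rho : R) (chi1 chi2 : 'I_(2 * L) -> R).
Hypotheses (hdx : 0 < dx) (hdv : 0 < dv) (hr : 0 < rho)
  (hc1 : forall k, 0 < chi1 k) (hc2 : forall k, 0 < chi2 k).

Definition Pw (p : 'I_N -> 'I_(2 * L) -> R) i := \sum_k dv * (p i k ^+ 2 / (chi1 k * rho)).
Definition Qw (q : 'I_N -> 'I_(2 * L) -> R) i := \sum_k dv * (q i k ^+ 2 * rho / chi2 k).

Lemma Pw_ge0 p i : 0 <= Pw p i.
Proof.
apply: sumr_ge0 => k _; apply: mulr_ge0; first exact: ltW.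
apply: divr_ge0; first exact: sqr_ge0.
by apply: ltW; apply: mulr_gt0.
Qed.

Lemma Qw_ge0 q i : 0 <= Qw q i.
Proof.
apply: sumr_ge0 => k _; apply: mulr_ge0; first exact: ltW.
apply: divr_ge0; last exact: ltW.
by apply: mulr_ge0; [exact: sqr_ge0| exact: ltW].
Qed.

Lemma normD_eq p q :
  normD dx dv rho chi1 chi2 p q = Num.sqrt (\sum_i dx * (Pw p i + Qw q i)).
Proof.
rewrite /normD; congr Num.sqrt; apply: eq_bigr => i _.
rewrite /Pw /Qw -big_split mulr_sumr; apply: eq_bigr => k _ /=; ring.
Qed.

Lemma norm_le (u P : 'I_N -> R) K : 0 <= K -> (forall i, u i ^+ 2 <= K * P i) ->
  norm2 dx u <= Num.sqrt K * Num.sqrt (\sum_i dx * P i).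
Proof.
move=> hK hu; rewrite -sqrtrM // /norm2; apply: ler_wsqrtr.
rewrite mulr_sumr; apply: ler_sum => i _; rewrite [K * _]mulrCA.
by apply: ler_wpM2l; [exact: ltW | exact: hu].
Qed.

Lemma cs1 a (p : 'I_N -> 'I_(2 * L) -> R) i :
  (\sum_k dv * a k * p i k) ^+ 2 <= rho * (\sum_k dv * a k ^+ 2 * chi1 k) * Pw p i.
Proof.
have := @cs _ _ dv a _ (fun k => p i k) hdv (fun k => mulr_gt0 (hc1 k) hr).
have -> : \sum_k dv * a k ^+ 2 * (chi1 k * rho) = rho * \sum_k dv * a k ^+ 2 * chi1 k.
  by rewrite mulr_sumr; apply: eq_bigr => k _; ring.
by [].
Qed.

Lemma cs2 a (q : 'I_N -> 'I_(2 * L) -> R) i :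
  (\sum_k dv * a k * q i k) ^+ 2 <= rho^-1 * (\sum_k dv * a k ^+ 2 * chi2 k) * Qw q i.
Proof.
have := @cs _ _ dv a _ (fun k => q i k) hdv (fun k => divr_gt0 (hc2 k) hr).
have -> : \sum_k dv * a k ^+ 2 * (chi2 k / rho) = rho^-1 * \sum_k dv * a k ^+ 2 * chi2 k.
  by rewrite mulr_sumr; apply: eq_bigr => k _; ring.
have -> : \sum_k dv * (q i k ^+ 2 / (chi2 k / rho)) = Qw q i.
  apply: eq_bigr => k _; field.
  by rewrite (gt_eqF (hc2 k)) (gt_eqF hr).
by [].
Qed.

Lemma diff_bound (x y s t P Q M1 M2 : R) : x ^+ 2 <= s * P -> y ^+ 2 <= t * Q ->
  0 <= P -> 0 <= Q -> s <= M1 -> t <= M2 ->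
  (x - y) ^+ 2 <= 2 * Num.max M1 M2 * (P + Q).
Proof.
move=> hx hy hP hQ hs ht.
set m := Num.max M1 M2.
have hm1 : M1 <= m by rewrite le_max lexx.
have hm2 : M2 <= m by rewrite le_max lexx orbT.
have h1 : s * P <= m * P by apply: ler_wpM2r => //; apply: le_trans hm1.
have h2 : t * Q <= m * Q by apply: ler_wpM2r => //; apply: le_trans hm2.
have h0 : (x - y) ^+ 2 <= 2 * x ^+ 2 + 2 * y ^+ 2.
  rewrite -subr_ge0.
  have -> : 2 * x ^+ 2 + 2 * y ^+ 2 - (x - y) ^+ 2 = (x + y) ^+ 2 by ring.
  exact: sqr_ge0.
apply: le_trans h0 _.
have -> : 2 * m * (P + Q) = 2 * (m * P) + 2 * (m * Q) by ring.
lra.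
Qed.

Lemma pair_bound a (p q : 'I_N -> 'I_(2 * L) -> R) M1 M2 i :
  \sum_k dv * a k ^+ 2 * chi1 k <= M1 -> \sum_k dv * a k ^+ 2 * chi2 k <= M2 ->
  (\sum_k dv * a k * p i k - \sum_k dv * a k * q i k) ^+ 2
    <= 2 * Num.max (rho * M1) (rho^-1 * M2) * (Pw p i + Qw q i).
Proof.
move=> h1 h2; apply: diff_bound (cs1 a p i) (cs2 a q i) (Pw_ge0 _ _) (Qw_ge0 _ _) _ _.
  by apply: ler_wpM2l => //; exact: ltW.
by apply: ler_wpM2l => //; rewrite invr_ge0; exact: ltW.
Qed.

Lemma mom_diff a (p q : 'I_N -> 'I_(2 * L) -> R) i :
  \sum_k dv * a k * hdiff p q i k = \sum_k dv * a k * p i k - \sum_k dv * a k * q i k.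
Proof. by rewrite -sumrB; apply: eq_bigr => k _; rewrite /hdiff; ring. Qed.

Lemma mom_perpf a (p q : 'I_N -> 'I_(2 * L) -> R) i :
  \sum_k dv * a k * perpf dv rho chi1 p q i k = \sum_k dv * a k * p i k
    - (dens dv p i - dens dv q i) / (rho ^+ 2 + 1) * rho ^+ 2 * \sum_k dv * a k * chi1 k.
Proof.
rewrite mulr_sumr -sumrB; apply: eq_bigr => k _; rewrite /perpf /projf; ring.
Qed.

Lemma mom_perpg a (p q : 'I_N -> 'I_(2 * L) -> R) i :
  \sum_k dv * a k * perpg dv rho chi2 p q i k = \sum_k dv * a k * q i k
    + (dens dv p i - dens dv q i) / (rho ^+ 2 + 1) * \sum_k dv * a k * chi2 k.
Proof.
rewrite mulr_sumr -big_split; apply: eq_bigr => k _; rewrite /perpg /projg /=; ring.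
Qed.


Lemma diff_bound2 (a b x y s t P Q M1 M2 M : R) : 0 < a -> 0 < b -> a <= M -> b <= M ->
  x ^+ 2 <= s * P -> y ^+ 2 <= t * Q ->
  0 <= P -> 0 <= Q -> s <= M1 -> t <= M2 ->
  (a * x - b * y) ^+ 2 <= M ^+ 2 * (2 * Num.max M1 M2 * (P + Q)).
Proof.
move=> ha hb haM hbM hx hy hP hQ hs ht.
set m := Num.max M1 M2.
have hm1 : M1 <= m by rewrite le_max lexx.
have hm2 : M2 <= m by rewrite le_max lexx orbT.
have h1 : s * P <= m * P by apply: ler_wpM2r => //; apply: le_trans hm1.
have h2 : t * Q <= m * Q by apply: ler_wpM2r => //; apply: le_trans hm2.
have hx' : x ^+ 2 <= m * P by apply: le_trans h1.
have hy' : y ^+ 2 <= m * Q by apply: le_trans h2.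
have ha2 : a ^+ 2 <= M ^+ 2 by rewrite ler_pXn2r // ?nnegrE; [exact: ltW | apply: le_trans haM; exact: ltW].
have hb2 : b ^+ 2 <= M ^+ 2 by rewrite ler_pXn2r // ?nnegrE; [exact: ltW | apply: le_trans hbM; exact: ltW].
have hM2 : 0 <= M ^+ 2 by exact: sqr_ge0.
have e1 : a ^+ 2 * x ^+ 2 <= M ^+ 2 * x ^+ 2 by apply: ler_wpM2r => //; exact: sqr_ge0.
have e2 : b ^+ 2 * y ^+ 2 <= M ^+ 2 * y ^+ 2 by apply: ler_wpM2r => //; exact: sqr_ge0.
have e3 : M ^+ 2 * x ^+ 2 <= M ^+ 2 * (m * P) by apply: ler_wpM2l.
have e4 : M ^+ 2 * y ^+ 2 <= M ^+ 2 * (m * Q) by apply: ler_wpM2l.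
have h0 : (a * x - b * y) ^+ 2 <= 2 * (a ^+ 2 * x ^+ 2) + 2 * (b ^+ 2 * y ^+ 2).
  rewrite -subr_ge0.
  have -> : 2 * (a ^+ 2 * x ^+ 2) + 2 * (b ^+ 2 * y ^+ 2) - (a * x - b * y) ^+ 2
     = (a * x + b * y) ^+ 2 by ring.
  exact: sqr_ge0.
apply: le_trans h0 _.
have -> : M ^+ 2 * (2 * m * (P + Q)) = 2 * (M ^+ 2 * (m * P)) + 2 * (M ^+ 2 * (m * Q)) by ring.
lra.
Qed.

Lemma core (F G : 'I_N -> 'I_(2 * L) -> R) (Dlo0 Dhi0 Dlo1 Dhi1 Dlo2 Dhi2 Qhi1 Qhi2 : R) :
  (forall k k', velidx k' = 1 - velidx k -> chi1 k = chi1 k') ->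
  (forall k k', velidx k' = 1 - velidx k -> chi2 k = chi2 k') ->
  \sum_k dv * chi1 k = 1 ->
  \sum_k dv * chi2 k = 1 ->
  0 < Dlo1 -> Dlo1 <= Dmom dv chi1 <= Dhi1 ->
  0 < Dlo2 -> Dlo2 <= Dmom dv chi2 <= Dhi2 ->
  Qmom dv chi1 <= Qhi1 ->
  Qmom dv chi2 <= Qhi2 ->
  Dlo0 <= D0mom dv rho chi1 chi2 <= Dhi0 ->
    let h := hdiff F G in
    let nF := normD dx dv rho chi1 chi2 F G in
    let nPiF := normD dx dv rho chi1 chi2
                  (projf dv rho chi1 F G) (projg dv rho chi2 F G) in
    let nPerpF := normD dx dv rho chi1 chi2
                  (perpf dv rho chi1 F G) (perpg dv rho chi2 F G) in
    [/\ norm2 dx (dens dv h) = C_u rho * nPiF,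
        norm2 dx (flux_mom dv h) <= C_J1 rho Dhi1 Dhi2 * nF,
        norm2 dx (flux_mom dv h) <= C_J1 rho Dhi1 Dhi2 * nPerpF,
        norm2 dx (S_mom dv (D0mom dv rho chi1 chi2) h)
          <= C_S rho Dlo0 Dhi0 Dlo1 Dlo2 Qhi1 Qhi2 * nPerpF
      & norm2 dx (fun i => rho^-1 * flux_mom dv F i - rho * flux_mom dv G i)
          <= C_J2 rho Dhi1 Dhi2 * nPerpF].
Proof.
move=> hs1 hs2 hsum1 hsum2 hD1lo /andP[hD1a hD1b] hD2lo /andP[hD2a hD2b] hQ1 hQ2 /andP[hD0a hD0b].
move=> h nF nPiF nPerpF.
set pf := perpf dv rho chi1 F G.
set pg := perpg dv rho chi2 F G.
have z1 := @sym_sum _ _ dv _ hs1.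
have z2 := @sym_sum _ _ dv _ hs2.
have hr2p : 0 < rho ^+ 2 + 1 by have := sqr_ge0 rho; lra.
have hr2 : rho ^+ 2 + 1 != 0 by rewrite gt_eqF.
have hrn : rho != 0 by rewrite gt_eqF.
have hDhi1 : 0 < Dhi1 by apply: lt_le_trans hD1lo (le_trans hD1a hD1b).
have hDhi2 : 0 < Dhi2 by apply: lt_le_trans hD2lo (le_trans hD2a hD2b).
have kge0 (a b : R) : 0 <= a -> 0 <= 2 * Num.max a b.
  move=> ha; apply: mulr_ge0; first by []. by rewrite le_max ha.
have Jf i : flux_mom dv F i = \sum_k dv * vel dv k * pf i k.
  by rewrite /pf mom_perpf z1 mulr0 subr0.
have Jg i : flux_mom dv G i = \sum_k dv * vel dv k * pg i k.
  by rewrite /pg mom_perpg z2 mulr0 addr0.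
have Jh i : flux_mom dv h i = flux_mom dv F i - flux_mom dv G i.
  by rewrite /flux_mom mom_diff.
split.
- rewrite /nPiF normD_eq.
  have hd i : dens dv h i = dens dv F i - dens dv G i.
    by rewrite /dens -sumrB; apply: eq_bigr => k _; rewrite /h /hdiff; ring.
  have hp i : Pw (projf dv rho chi1 F G) i + Qw (projg dv rho chi2 F G) i
      = rho / (rho ^+ 2 + 1) * (dens dv h i) ^+ 2.
    rewrite hd /Pw /Qw.
    have -> : \sum_k dv * (projf dv rho chi1 F G i k ^+ 2 / (chi1 k * rho))
        = ((dens dv F i - dens dv G i) / (rho ^+ 2 + 1)) ^+ 2 * rho ^+ 3 * \sum_k dv * chi1 k.
      rewrite mulr_sumr; apply: eq_bigr => k _; rewrite /projf; field.
      by rewrite ?hrn ?hr2 ?(gt_eqF (hc1 k)).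
    have -> : \sum_k dv * (projg dv rho chi2 F G i k ^+ 2 * rho / chi2 k)
        = ((dens dv F i - dens dv G i) / (rho ^+ 2 + 1)) ^+ 2 * rho * \sum_k dv * chi2 k.
      rewrite mulr_sumr; apply: eq_bigr => k _; rewrite /projg; field.
      by rewrite ?hrn ?hr2 ?(gt_eqF (hc2 k)).
    rewrite hsum1 hsum2; field.
    by rewrite ?hrn ?hr2.
  under eq_bigr do rewrite hp.
  have -> : \sum_i dx * (rho / (rho ^+ 2 + 1) * dens dv h i ^+ 2)
      = rho / (rho ^+ 2 + 1) * \sum_i dx * dens dv h i ^+ 2.
    by rewrite mulr_sumr; apply: eq_bigr => i _; ring.
  rewrite /C_u -sqrtrM; last by apply: divr_ge0; apply: ltW.
  rewrite /norm2 mulrA (_ : (rho ^+ 2 + 1) / rho * (rho / (rho ^+ 2 + 1)) = 1) ?mul1r //.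
  field.
  by rewrite ?hrn ?hr2.
- rewrite /nF normD_eq; apply: norm_le.
    by apply: kge0; apply: mulr_ge0; apply: ltW.
  move=> i; rewrite Jh /flux_mom; exact: pair_bound.
- rewrite /nPerpF normD_eq; apply: norm_le.
    by apply: kge0; apply: mulr_ge0; apply: ltW.
  move=> i; rewrite Jh Jf Jg; exact: pair_bound.
- set D0 := D0mom dv rho chi1 chi2.
  pose a := fun k : 'I_(2 * L) => vel dv k ^+ 2 - D0.
  have hchi1 : \sum_k dv * a k * chi1 k = Dmom dv chi1 - D0.
    have -> : \sum_k dv * a k * chi1 k = \sum_k (dv * vel dv k ^+ 2 * chi1 k - D0 * (dv * chi1 k)).
      by apply: eq_bigr => k _; rewrite /a; ring.
    by rewrite sumrB -mulr_sumr hsum1 mulr1.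
  have hchi2 : \sum_k dv * a k * chi2 k = Dmom dv chi2 - D0.
    have -> : \sum_k dv * a k * chi2 k = \sum_k (dv * vel dv k ^+ 2 * chi2 k - D0 * (dv * chi2 k)).
      by apply: eq_bigr => k _; rewrite /a; ring.
    by rewrite sumrB -mulr_sumr hsum2 mulr1.
  have Sh i : S_mom dv D0 h i = \sum_k dv * a k * pf i k - \sum_k dv * a k * pg i k.
    have -> : S_mom dv D0 h i = \sum_k dv * a k * h i k by [].
    rewrite /h mom_diff /pf /pg mom_perpf mom_perpg hchi1 hchi2 /D0 /D0mom.
    field.
    by rewrite ?hr2.
  have hD0 : 0 < D0.
    rewrite /D0 /D0mom; apply: divr_gt0 => //.
    have : 0 <= rho ^+ 2 * Dmom dv chi1 by apply: mulr_ge0; [exact: sqr_ge0 | lra].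
    lra.
  have hprod : Dlo0 * Dlo1 <= D0 * Dmom dv chi1.
    case: (lerP 0 Dlo0) => h0.
      apply: (@le_trans _ _ (Dlo0 * Dmom dv chi1)); first by apply: ler_wpM2l.
      by apply: ler_wpM2r => //; lra.
    have : 0 < D0 * Dmom dv chi1 by apply: mulr_gt0 => //; lra.
    have : Dlo0 * Dlo1 < 0 by rewrite nmulr_rlt0.
    lra.
  have hprod2 : Dlo0 * Dlo2 <= D0 * Dmom dv chi2.
    case: (lerP 0 Dlo0) => h0.
      apply: (@le_trans _ _ (Dlo0 * Dmom dv chi2)); first by apply: ler_wpM2l.
      by apply: ler_wpM2r => //; lra.
    have : 0 < D0 * Dmom dv chi2 by apply: mulr_gt0 => //; lra.
    have : Dlo0 * Dlo2 < 0 by rewrite nmulr_rlt0.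
    lra.
  have hsq : D0 ^+ 2 <= Dhi0 ^+ 2.
    by rewrite ler_pXn2r // ?nnegrE; [apply: ltW | apply: le_trans hD0b; apply: ltW].
  have hq1 : \sum_k dv * a k ^+ 2 * chi1 k = Qmom dv chi1 - 2 * D0 * Dmom dv chi1 + D0 ^+ 2.
    have -> : \sum_k dv * a k ^+ 2 * chi1 k = \sum_k (dv * vel dv k ^+ 4 * chi1 k
        - 2 * D0 * (dv * vel dv k ^+ 2 * chi1 k) + D0 ^+ 2 * (dv * chi1 k)).
      by apply: eq_bigr => k _; rewrite /a; ring.
    by rewrite big_split sumrB /= -(mulr_sumr _ _ _ (2 * D0)) -(mulr_sumr _ _ _ (D0 ^+ 2)) hsum1 mulr1.
  have hq2 : \sum_k dv * a k ^+ 2 * chi2 k = Qmom dv chi2 - 2 * D0 * Dmom dv chi2 + D0 ^+ 2.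
    have -> : \sum_k dv * a k ^+ 2 * chi2 k = \sum_k (dv * vel dv k ^+ 4 * chi2 k
        - 2 * D0 * (dv * vel dv k ^+ 2 * chi2 k) + D0 ^+ 2 * (dv * chi2 k)).
      by apply: eq_bigr => k _; rewrite /a; ring.
    by rewrite big_split sumrB /= -(mulr_sumr _ _ _ (2 * D0)) -(mulr_sumr _ _ _ (D0 ^+ 2)) hsum2 mulr1.
  have hb1 : \sum_k dv * a k ^+ 2 * chi1 k <= Qhi1 - 2 * Dlo0 * Dlo1 + Dhi0 ^+ 2.
    rewrite hq1; lra.
  have hb2 : \sum_k dv * a k ^+ 2 * chi2 k <= Qhi2 - 2 * Dlo0 * Dlo2 + Dhi0 ^+ 2.
    rewrite hq2; lra.
  have hs1p : 0 <= \sum_k dv * a k ^+ 2 * chi1 k.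
    apply: sumr_ge0 => k _; apply: mulr_ge0; last exact: ltW.
    by apply: mulr_ge0; [exact: ltW | exact: sqr_ge0].
  rewrite /nPerpF normD_eq; apply: norm_le.
    by apply: kge0; apply: mulr_ge0; [exact: ltW | lra].
  move=> i; rewrite Sh; exact: pair_bound hb1 hb2.
- set M := Num.max rho^-1 rho.
  have hM0 : 0 <= M by rewrite le_max (ltW hr) orbT.
  have e : C_J2 rho Dhi1 Dhi2 = Num.sqrt (M ^+ 2 * (2 * Num.max (rho * Dhi1) (rho^-1 * Dhi2))).
    by rewrite sqrtrM ?sqr_ge0 // sqrtr_sqr ger0_norm.
  rewrite e /nPerpF normD_eq; apply: norm_le.
    by apply: mulr_ge0; [exact: sqr_ge0 | apply: kge0; apply: mulr_ge0; apply: ltW].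
  move=> i; rewrite Jf Jg -mulrA.
  have := diff_bound2 (rho^-1) rho _ _ _ _ _ _ (rho * Dhi1) (rho^-1 * Dhi2) M _ _ _ _
     (cs1 (vel dv) pf i) (cs2 (vel dv) pg i) (Pw_ge0 pf i) (Qw_ge0 pg i).
  apply.
  + by rewrite invr_gt0.
  + by [].
  + by rewrite /M le_max lexx.
  + by rewrite /M le_max lexx orbT.
  + by apply: ler_wpM2l => //; exact: ltW.
  + by apply: ler_wpM2l => //; rewrite invr_ge0; exact: ltW.
Qed.
End Core.

Theorem lemma4p3 (R : realType) (N L : nat) (dx vstar dt lam rho : R)
    (chi1 chi2 : 'I_(2 * L) -> R)
    (Dlo0 Dhi0 Dlo1 Dhi1 Dlo2 Dhi2 Qhi1 Qhi2 : R)
    (f g : nat -> 'I_N -> 'I_(2 * L) -> R) :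
  (0 < N)%N -> (0 < L)%N ->
  0 < dx -> 0 < vstar -> 0 < dt -> lam = dx / (2 * dt) -> 0 < rho ->
  (forall k, 0 < chi1 k) -> (forall k, 0 < chi2 k) ->
  (forall k k', velidx k' = 1 - velidx k -> chi1 k = chi1 k') ->
  (forall k k', velidx k' = 1 - velidx k -> chi2 k = chi2 k') ->
  \sum_k dvel L vstar * chi1 k = 1 ->
  \sum_k dvel L vstar * chi2 k = 1 ->
  0 < Dlo1 -> Dlo1 <= Dmom (dvel L vstar) chi1 <= Dhi1 ->
  0 < Dlo2 -> Dlo2 <= Dmom (dvel L vstar) chi2 <= Dhi2 ->
  Qmom (dvel L vstar) chi1 <= Qhi1 ->
  Qmom (dvel L vstar) chi2 <= Qhi2 ->
  Dlo0 <= D0mom (dvel L vstar) rho chi1 chi2 <= Dhi0 ->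
  (forall n, scheme_step dx dt (dvel L vstar) lam rho chi1 chi2
               (f n) (g n) (f n.+1) (g n.+1)) ->
  forall n : nat,
    let dv := dvel L vstar in
    let h := hdiff (f n) (g n) in
    let nF := normD dx dv rho chi1 chi2 (f n) (g n) in
    let nPiF := normD dx dv rho chi1 chi2
                  (projf dv rho chi1 (f n) (g n)) (projg dv rho chi2 (f n) (g n)) in
    let nPerpF := normD dx dv rho chi1 chi2
                  (perpf dv rho chi1 (f n) (g n)) (perpg dv rho chi2 (f n) (g n)) in
    [/\ norm2 dx (dens dv h) = C_u rho * nPiF,
        norm2 dx (flux_mom dv h) <= C_J1 rho Dhi1 Dhi2 * nF,
        norm2 dx (flux_mom dv h) <= C_J1 rho Dhi1 Dhi2 * nPerpF,
        norm2 dx (S_mom dv (D0mom dv rho chi1 chi2) h)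
          <= C_S rho Dlo0 Dhi0 Dlo1 Dlo2 Qhi1 Qhi2 * nPerpF
      & norm2 dx (fun i => rho^-1 * flux_mom dv (f n) i - rho * flux_mom dv (g n) i)
          <= C_J2 rho Dhi1 Dhi2 * nPerpF].
Proof.
move=> hN hL hdx hvs hdt hlam hr hc1 hc2 hs1 hs2 hsum1 hsum2 hD1lo hD1 hD2lo hD2 hQ1 hQ2 hD0 _ n.
have hdv : 0 < dvel L vstar by rewrite /dvel divr_gt0 // ltr0n.
by apply: core.
Qed.
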